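(* Let $Y$ be a normed linear space, $F\subset\mathbb R^n$, $x\in F\cap\operatorname{der}F$, $f\colon F\to Y$, and let $L\in\mathcal L(\mathbb R^n,Y)$ be a relative strict derivative of $f$ at $x$ (with respect to $F$). Let $v_1,\dots,v_n\in\operatorname{Ptg}(F,x)$ be unit vectors and $|\det(v_1,\dots,v_n)|>d>0$. Then $$\|L\|_{\mathcal L(\mathbb R^n,Y)}\le\limsup_{\substack{y\to x,\ z\to x\\ y,z\in F,\ y\ne z}}\frac nd\,\frac{\|f(y)-f(z)\|_Y}{|y-z|}.$$
   Context: $\operatorname{der}F$ is the set of accumulation points of $F$. The paratingent cone $\operatorname{Ptg}(F,x)$ is the set of $v\in\mathbb R^n$ for which there are $x_k,y_k\in F$ and $\alpha_k\in\mathbb R$ ($k\in\mathbb N$) with $x_k\to x$, $y_k\to x$ and $\alpha_k(y_k-x_k)\to v$. $L$ is a relative strict derivative of $f$ at $x$ if $x$ is isolated in $F$ or $\|f(y)-f(z)-L(y-z)\|/|y-z|\to0$ as $y,z\to x$, $y,z\in F$, $y\ne z$ (with $y=x$ or $z=x$ allowed). *)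

(* Defs.v *)
From HB Require Import structures.
From mathcomp Require Import all_boot all_order all_algebra.
From mathcomp Require Import all_classical all_reals all_analysis.
Set Implicit Arguments. Unset Strict Implicit. Unset Printing Implicit Defensive.
Import Order.TTheory GRing.Theory Num.Theory.
Import numFieldNormedType.Exports.
Local Open Scope classical_set_scope.
Local Open Scope ring_scope.

Definition enorm {R : realType} {n : nat} (u : 'rV[R]_n) : R :=
  Num.sqrt (\sum_(i < n) (u ord0 i) ^+ 2).

Definition ecvg {R : realType} {n : nat} (u : nat -> 'rV[R]_n) (a : 'rV[R]_n) : Prop :=
  forall e : R, 0 < e -> exists N : nat, forall k : nat, (N <= k)%N -> enorm (u k - a) < e.

Definition der {R : realType} {n : nat} (F : set 'rV[R]_n) : set 'rV[R]_n :=
  [set x | forall e : R, 0 < e -> exists2 y, F y & y != x /\ enorm (y - x) < e].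

Definition isolated_in {R : realType} {n : nat} (F : set 'rV[R]_n) (x : 'rV[R]_n) : Prop :=
  F x /\ ~ der F x.

Definition Ptg {R : realType} {n : nat} (F : set 'rV[R]_n) (x : 'rV[R]_n) : set 'rV[R]_n :=
  [set v | exists (xs ys : nat -> 'rV[R]_n) (al : nat -> R),
      (forall k, F (xs k)) /\ (forall k, F (ys k)) /\
      ecvg xs x /\ ecvg ys x /\ ecvg (fun k => al k *: (ys k - xs k)) v].

Definition rel_strict_derivative {R : realType} {n : nat} {Y : normedModType R}
    (F : set 'rV[R]_n) (f : 'rV[R]_n -> Y) (x : 'rV[R]_n) (L : 'rV[R]_n -> Y) : Prop :=
  isolated_in F x \/
  forall e : R, 0 < e -> exists2 delta : R, 0 < delta &
    forall y z, F y -> F z -> y != z -> enorm (y - x) < delta -> enorm (z - x) < delta ->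
      `|f y - f z - L (y - z)| <= e * enorm (y - z).

Definition opnorm {R : realType} {n : nat} {Y : normedModType R} (L : 'rV[R]_n -> Y) : \bar R :=
  ereal_sup [set (`|L u|)%:E | u in [set u | enorm u <= 1]].

Definition limsup_pairs {R : realType} {n : nat} (F : set 'rV[R]_n) (x : 'rV[R]_n)
    (g : 'rV[R]_n -> 'rV[R]_n -> R) : \bar R :=
  ereal_inf [set ereal_sup [set (g p.1 p.2)%:E | p in [set p : 'rV[R]_n * 'rV[R]_n |
                    F p.1 /\ F p.2 /\ p.1 != p.2 /\ enorm (p.1 - x) < delta /\ enorm (p.2 - x) < delta]]
            | delta in [set delta : R | 0 < delta]].

(* Main.v *)
Require Import Defs.
From HB Require Import structures.
From mathcomp Require Import all_boot all_order all_algebra.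
From mathcomp Require Import all_classical all_reals all_analysis.
Import Order.TTheory GRing.Theory Num.Theory.
Import numFieldNormedType.Exports.
Local Open Scope classical_set_scope.
Local Open Scope ring_scope.

From mathcomp Require Import zify ring lra.
Set Implicit Arguments. Unset Strict Implicit. Unset Printing Implicit Defensive.
Section Had.
Variable R : realFieldType.

Lemma gram_diag_ge0 m n (A : 'M[R]_(m,n)) i : 0 <= (A *m A^T) i i.
Proof. rewrite !mxE; apply: sumr_ge0 => t _; rewrite mxE; exact: mulr_ge0_le0 || exact: (sqr_ge0 (A i t)). Qed.

Lemma gram_diag0 m n (A : 'M[R]_(m,n)) i : (A *m A^T) i i = 0 -> forall t, A i t = 0.
Proof.
rewrite !mxE => /eqP; rewrite psumr_eq0 => [/allP H t|t _]; last by rewrite mxE sqr_ge0.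
by have /(_ (mem_index_enum t))/implyP/(_ isT) := H t; rewrite mxE mulf_eq0 orbb => /eqP.
Qed.

Lemma GS k n (B : 'M[R]_(k,n)) : exists T : 'M[R]_k, \det T = 1 /\
  (forall i j, i != j -> ((T *m B) *m (T *m B)^T) i j = 0) /\
  (forall i, ((T *m B) *m (T *m B)^T) i i <= (B *m B^T) i i).
Proof.
elim: k B => [|k IH] B.
  by exists 1; rewrite det1; split => //; split => -[].
have [T' [dT' [oT' lT']]] := IH (dsubmx (B : 'M[R]_(1 + k, n))).
set B' := dsubmx (B : 'M[R]_(1 + k, n)).
set b := usubmx (B : 'M[R]_(1 + k, n)).
set C' := T' *m B'.
set G' := C' *m C'^T.
pose mu : 'M[R]_(1,k) := \row_j ((b *m C'^T) 0 j / G' j j).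
pose c := b - mu *m C'.
have cC : c *m C'^T = 0.
  apply/matrixP => i j; rewrite [i]ord1 mulmxBl -mulmxA -/G' mxE [X in _ + X]mxE [X in _ - X]mxE .
  have -> : (0 : 'M[R]_(1,k)) 0 j = 0 by rewrite mxE.
  rewrite (bigD1 j) //= big1 => [|l lj]; last first.
    by rewrite /G' oT' ?mulr0 // eq_sym.
  rewrite addr0 /mu [X in _ - X * _]mxE.
  have [G0|Gn0] := eqVneq (G' j j) 0.
    rewrite G0 mulr0 subr0 mxE big1 // => t _.
    by rewrite [C'^T _ _]mxE (gram_diag0 G0) mulr0.
  by rewrite mulfVK // subrr.
have eB : col_mx b B' = (B : 'M[R]_(1+k,n)) by rewrite vsubmxK.
have C'c : C' *m c^T = 0.
  have : (c *m C'^T)^T = 0 by rewrite cC trmx0.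
  by rewrite trmx_mul trmxK.
suff [T [dT [oT lT]]] : exists T : 'M[R]_(1+k), \det T = 1 /\
  (forall i j, i != j -> ((T *m col_mx b B') *m (T *m col_mx b B')^T) i j = 0) /\
  (forall i, ((T *m col_mx b B') *m (T *m col_mx b B')^T) i i <= (col_mx b B' *m (col_mx b B')^T) i i).
  by exists T; rewrite -eB.
exists (block_mx 1 (-(mu *m T')) 0 T').
have TB : block_mx 1 (-(mu *m T')) 0 T' *m col_mx b B' = col_mx c C'.
  by rewrite mul_block_col mul1mx mul0mx add0r mulNmx -mulmxA.
have Ec : c = b - mu *m C' by [].
clearbody c.
rewrite TB !tr_col_mx !mul_col_row cC C'c.
split; first by rewrite det_ublock det1 mul1r.
split.
  move=> i j; rewrite -(fintype.splitK i) -(fintype.splitK j).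
  case: (fintype.split i) => i'; case: (fintype.split j) => j' /= ij.
  - by move: ij; rewrite [i']ord1 [j']ord1 eqxx.
  - by rewrite block_mxEur mxE.
  - by rewrite block_mxEdl mxE.
  - rewrite block_mxEdr oT' //; apply: contraNneq ij => -> //.
move=> i; rewrite -(fintype.splitK i); case: (fintype.split i) => i' /=.
  rewrite !block_mxEul.
  have -> : b = c + mu *m C' by rewrite Ec subrK.
  rewrite linearD /= !mulmxDl !mulmxDr.
  rewrite [(mu *m C')^T]trmx_mul mulmxA cC mul0mx addr0.
  rewrite -[mu *m C' *m c^T]mulmxA C'c mulmx0 add0r.
  by rewrite [X in _ <= X]mxE lerDl -trmx_mul gram_diag_ge0.
by rewrite block_mxEdr block_mxEdr lT'.
Qed.

Lemma hadamard n (B : 'M[R]_n) : (forall i, (B *m B^T) i i <= 1) -> `|\det B| <= 1.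
Proof.
move=> H1.
have [T [dT [oT lT]]] := GS B.
set C := T *m B.
have dC : \det C = \det B by rewrite det_mulmx dT mul1r.
have E : C *m C^T = diag_mx (\row_i (C *m C^T) i i).
  apply/matrixP => i j; rewrite [RHS]mxE [X in X *+ _]mxE.
  have [->|ij] := eqVneq i j; first by rewrite mulr1n.
  by rewrite mulr0n oT.
have : \det B ^+ 2 <= 1.
  rewrite -dC expr2 -{2}det_tr -det_mulmx E det_diag.
  apply: (@le_trans _ _ (\prod_(i < n) (1:R))); last by rewrite big1_eq.
  by apply: ler_prod => i _; rewrite mxE gram_diag_ge0 (le_trans (lT i)).
by move=> h; rewrite -(@expr_le1 _ 2) // -normrX ger0_norm ?sqr_ge0.
Qed.
End Had.

Section Enorm.
Variables (R : realType) (n : nat).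
Implicit Types (u w v : 'rV[R]_n).

Lemma sumsq_ge0 u : 0 <= \sum_(i < n) (u ord0 i) ^+ 2.
Proof. by apply: sumr_ge0 => i _; rewrite sqr_ge0. Qed.

Lemma enorm_ge0 u : 0 <= enorm u.
Proof. exact: sqrtr_ge0. Qed.

Lemma enorm_sq u : enorm u ^+ 2 = \sum_(i < n) (u ord0 i) ^+ 2.
Proof. by rewrite /enorm sqr_sqrtr // sumsq_ge0. Qed.

Lemma enorm_coord u j : `|u ord0 j| <= enorm u.
Proof.
rewrite /enorm -sqrtr_sqr ler_wsqrtr // (bigD1 j) //= lerDl.
by apply: sumr_ge0 => i _; rewrite sqr_ge0.
Qed.

Lemma enormZ a u : enorm (a *: u) = `|a| * enorm u.
Proof.
rewrite /enorm -sqrtr_sqr -sqrtrM ?sqr_ge0 // mulr_sumr; congr Num.sqrt.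
by apply: eq_bigr => i _; rewrite mxE exprMn.
Qed.

Lemma enormN u : enorm (- u) = enorm u.
Proof. by rewrite -scaleN1r enormZ normrN normr1 mul1r. Qed.

Lemma enorm_eq0 u : enorm u = 0 -> u = 0.
Proof.
move=> h; apply/matrixP => i j; rewrite [i]ord1 mxE.
by apply/eqP; rewrite -normr_le0 -h enorm_coord.
Qed.

Lemma enormB_sym u w : enorm (u - w) = enorm (w - u).
Proof. by rewrite -enormN opprB. Qed.

Lemma enorm_bound v w e : enorm v = 1 -> enorm (w - v) < e -> e <= 1 ->
  enorm w <= 1 + 3 * n%:R * e.
Proof.
move=> v1 wv e1.
have e0 : 0 < e by apply: le_lt_trans wv; exact: enorm_ge0.
have hsq : enorm w ^+ 2 <= 1 + 3 * n%:R * e.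
  rewrite enorm_sq.
  have -> : \sum_(i < n) (w ord0 i) ^+ 2 = \sum_(i < n) (v ord0 i) ^+ 2 +
     \sum_(i < n) (2 * v ord0 i * (w - v) ord0 i + ((w - v) ord0 i) ^+ 2).
    rewrite -big_split /=; apply: eq_bigr => i _; rewrite !mxE; ring.
  rewrite -enorm_sq v1 expr1n lerD2l.
  have -> : 3 * n%:R * e = \sum_(i < n) (3 * e).
    by rewrite sumr_const card_ord -mulr_natr; ring.
  apply: ler_sum => i _.
  have a1 := enorm_coord v i; rewrite v1 in a1.
  have a2 := le_lt_trans (enorm_coord (w - v) i) wv.
  move: a1 a2; set p := v ord0 i; set q := (w - v) ord0 i => a1 a2.
  have : 2 * p * q <= 2 * e.
    rewrite -mulrA ler_pM2l //; apply: le_trans (ler_norm _) _.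
    rewrite normrM; rewrite -[e]mul1r; apply: ler_pM; rewrite ?normr_ge0 //.
    exact: ltW.
  have : q ^+ 2 <= e.
    rewrite -real_normK ?num_real //; apply: le_trans (_ : e * e <= e).
      by rewrite expr2; apply: ler_pM; rewrite ?normr_ge0 // ltW.
    nra.
  lra.
have hn := enorm_ge0 w.
have : 0 <= 3 * n%:R * e by rewrite mulr_ge0 // ?ltW // mulr_ge0.
nra.
Qed.

Lemma linear_bound (Y : normedModType R) (L : {linear 'rV[R]_n -> Y}) u :
  `|L u| <= (\sum_(j < n) `|L 'e_j|) * enorm u.
Proof.
rewrite {1}(row_sum_delta u) linear_sum /= mulr_suml.
apply: le_trans (ler_norm_sum _ _ _) _; apply: ler_sum => j _.
rewrite linearZ /= normrZ mulrC ler_wpM2l //.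
by rewrite [u 0 j](_ : _ = u ord0 j) // enorm_coord.
Qed.
End Enorm.

Lemma cramer (R : realFieldType) n (V : 'M[R]_n) (u : 'rV[R]_n) :
  (forall i, (V *m V^T) i i <= 1) -> (u *m u^T) 0 0 <= 1 -> \det V != 0 ->
  exists c : 'rV[R]_n, u = c *m V /\ forall i, `|c 0 i| <= `|\det V|^-1.
Proof.
move=> hV hu dV0.
exists ((\det V)^-1 *: (u *m \adj V)); split.
  by rewrite -scalemxAl -mulmxA mul_adj_mx mul_mx_scalar scalerA mulVf // scale1r.
move=> i.
pose W := \matrix_(l, j) if l == i then u 0 j else V l j.
have cof : forall j, cofactor W i j = cofactor V i j.
  move=> j; rewrite /cofactor; congr (_ * \det _); apply/matrixP => k l.
  by rewrite !mxE eq_sym (negbTE (neq_lift i k)).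
have eW : (u *m \adj V) 0 i = \det W.
  rewrite (expand_det_row W i) mxE; apply: eq_bigr => j _.
  by rewrite [\adj V j i]mxE cof mxE eqxx.
have hW : forall l, (W *m W^T) l l <= 1.
  move=> l; have [->|li] := eqVneq l i.
    apply: le_trans hu; rewrite le_eqVlt; apply/orP; left; apply/eqP.
    by rewrite !mxE; apply: eq_bigr => j _; rewrite !mxE eqxx.
  suff -> : (W *m W^T) l l = (V *m V^T) l l by [].
  by rewrite !mxE; apply: eq_bigr => j _; rewrite !mxE (negbTE li).
rewrite mxE eW normrM normfV.
have := hadamard hW; have := normr_ge0 (\det W); have := normr_ge0 (\det V).
set a := `|\det V|; set b := `|\det W| => a0 b0 b1.
by rewrite -[X in _ <= X]mulr1 ler_wpM2l ?invr_ge0.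
Qed.

Lemma arith1 (R : realType) (K eta A C ep z : R) : 0 <= K -> 0 <= A -> 0 <= C -> 0 < eta ->
  eta <= 1/2 -> eta * (2 + A * K + C + A) <= ep -> 
  z <= (K + eta) * (1 + A * eta) + C * eta -> z <= K + ep.
Proof.
move=> K0 A0 C0 e0 e1 eM hz.
have h1 : A * eta * eta <= A * eta.
  by rewrite -[X in _ <= X]mulr1; apply: ler_wpM2l; [apply: mulr_ge0 => //; apply: ltW | lra].
lra.
Qed.

Lemma arith2 (R : realType) (a : R) : a <= a - 1 -> False.
Proof. move=> *; lra. Qed.

Lemma arith3 (R : realType) : (1/2 : R) < 1.
Proof. lra. Qed.

Lemma arith4 (R : realType) (K A C : R) : 0 <= K -> 0 <= A -> 0 <= C -> 0 < 2 + A * K + C + A.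
Proof. move=> *; nra. Qed.

Theorem lemmaB1 (R : realType) (n : nat) (Y : normedModType R)
    (F : set 'rV[R]_n) (x : 'rV[R]_n) (f : 'rV[R]_n -> Y)
    (L : {linear 'rV[R]_n -> Y}) (v : 'I_n -> 'rV[R]_n) (d : R) :
  F x -> der F x ->
  rel_strict_derivative F f x L ->
  (forall i, Ptg F x (v i)) ->
  (forall i, enorm (v i) = 1) ->
  0 < d -> d < `|\det (\matrix_(i, j) v i ord0 j)| ->
  (opnorm L <= limsup_pairs F x (fun y z => (n%:R / d * (`|f y - f z| / enorm (y - z)))%R))%E.
Proof.
move=> Fx derx sd Ptgv v1 d0 dlt.
have n0 : (0 < n)%N.
  have [y0 Fy0 [y0x _]] := derx 1 ltr01.
  rewrite lt0n; apply/negP => /eqP n_0.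
  move: y0x; apply/negP; rewrite negbK; apply/eqP/matrixP => i j; exfalso.
  by case: j => j /=; rewrite n_0.
have nn0 : 0 < n%:R :> R by rewrite ltr0n.
set g := fun y z => (n%:R / d * (`|f y - f z| / enorm (y - z)))%R.
set V := \matrix_(i, j) v i ord0 j.
fold V in dlt.
have dV : \det V != 0 by rewrite -normr_gt0 (lt_trans d0 dlt).
have hV : forall i, (V *m V^T) i i <= 1.
  move=> i; have -> : (V *m V^T) i i = enorm (v i) ^+ 2.
    by rewrite enorm_sq mxE; apply: eq_bigr => j _; rewrite !mxE expr2.
  by rewrite v1 expr1n.
have sdr : forall e : R, 0 < e -> exists2 delta : R, 0 < delta &
    forall y z, F y -> F z -> y != z -> enorm (y - x) < delta -> enorm (z - x) < delta ->
      `|f y - f z - L (y - z)| <= e * enorm (y - z).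
  by case: sd => // -[_].
have enorm0 : enorm (0 : 'rV[R]_n) = 0.
  by rewrite -(scale0r (0 : 'rV[R]_n)) enormZ normr0 mul0r.
have core : forall r : R, (limsup_pairs F x g < r%:E)%E ->
    forall u, enorm u <= 1 -> `|L u| <= r.
  move=> r /ereal_inf_lt [_ [delta delta0 <-] slt] u u1.
  have gr : forall y z, F y -> F z -> y != z -> enorm (y - x) < delta ->
      enorm (z - x) < delta -> g y z < r.
    move=> y z Fy Fz yz hy hz; rewrite -lte_fin; apply: le_lt_trans slt.
    by apply: ereal_sup_ubound; exists (y, z).
  set K := r * d / n%:R.
  have lip : forall y z, F y -> F z -> y != z -> enorm (y - x) < delta ->
      enorm (z - x) < delta -> `|f y - f z| <= K * enorm (y - z).
    move=> y z Fy Fz yz hy hz.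
    have h := gr y z Fy Fz yz hy hz.
    have ep : 0 < enorm (y - z).
      rewrite lt_neqAle enorm_ge0 andbT eq_sym; apply/eqP => /enorm_eq0/eqP.
      by rewrite subr_eq0 (negbTE yz).
    have -> : `|f y - f z| = g y z * (d / n%:R * enorm (y - z)).
      rewrite /g; field; rewrite ?gt_eqF //.
    rewrite (_ : K * _ = r * (d / n%:R * enorm (y - z))); last by rewrite /K; ring.
    apply: ler_wpM2r (ltW h); apply: mulr_ge0 (enorm_ge0 _).
    by apply: divr_ge0; apply: ltW.
  have K0 : 0 <= K.
    have [y0 Fy0 [y0x y0d]] := derx delta delta0.
    have := lip y0 x Fy0 Fx y0x y0d; rewrite subrr enorm0 => /(_ delta0) h.
    have ep : 0 < enorm (y0 - x).
      rewrite lt_neqAle enorm_ge0 andbT eq_sym; apply/eqP => /enorm_eq0/eqP.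
      by rewrite subr_eq0 (negbTE y0x).
    by rewrite -(pmulr_lge0 _ ep) (le_trans (normr_ge0 _) h).
  have Lv : forall i, `|L (v i)| <= K.
    move=> i.
    have [xs [ys [al [Fxs [Fys [cxs [cys cw]]]]]]] := Ptgv i.
    set C := \sum_(j < n) `|L 'e_j|.
    have C0 : 0 <= C by apply: sumr_ge0.
    pose A : R := 3 * n%:R.
    have A0 : 0 <= A by rewrite mulr_ge0.
    have main : forall eta, 0 < eta -> eta < 1 ->
        `|L (v i)| <= (K + eta) * (1 + A * eta) + C * eta.
      move=> eta e0 e1.
      have [dl dl0 hdl] := sdr eta e0.
      set eps := Num.min delta dl.
      have eps0 : 0 < eps by rewrite lt_min delta0 dl0.
      have [N1 hN1] := cxs eps eps0; have [N2 hN2] := cys eps eps0.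
      have [N3 hN3] := cw eta e0.
      set k := (N1 + N2 + N3)%N.
      have := hN1 k (leq_trans (leq_addr N2 N1) (leq_addr N3 _)).
      have := hN2 k (leq_trans (leq_addl N1 N2) (leq_addr N3 _)).
      have := hN3 k (leq_addl _ _).
      move=> hw hy hx; rewrite /eps !lt_min in hy hx.
      case/andP: hy => hy hy'; case/andP: hx => hx hx'.
      set y := ys k in hw hy hy'; set z := xs k in hw hx hx'.
      have yz : y != z.
        apply/negP => /eqP yz; move: hw; rewrite yz subrr scaler0 sub0r enormN v1.
        by move=> /(lt_trans e1); rewrite ltxx.
      have hp : 0 < enorm (y - z).
        rewrite lt_neqAle enorm_ge0 andbT eq_sym; apply/eqP => /enorm_eq0/eqP.
        by rewrite subr_eq0 (negbTE yz).
      have l1 := lip y z (Fys k) (Fxs k) yz hy hx.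
      have l2 := hdl y z (Fys k) (Fxs k) yz hy' hx'.
      have Lh : `|L (y - z)| <= (K + eta) * enorm (y - z).
        have -> : L (y - z) = (f y - f z) - (f y - f z - L (y - z)).
          by rewrite [in RHS]opprB [in RHS]addrC subrK.
        by apply: le_trans (ler_normB _ _) _; rewrite mulrDl lerD.
      set w := al k *: (y - z) in hw.
      have Lw : `|L w| <= (K + eta) * enorm w.
        rewrite linearZ normrZ enormZ mulrCA ler_wpM2l //.
      have wb : enorm w <= 1 + A * eta by apply: enorm_bound (v1 i) hw (ltW e1).
      have vw : `|L (v i) - L w| <= C * eta.
        rewrite -linearB; apply: le_trans (linear_bound L _) _.
        by rewrite ler_wpM2l // enormB_sym ltW.
      have tri : `|L (v i)| <= `|L w| + `|L (v i) - L w|.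
        have {1}-> : L (v i) = L w + (L (v i) - L w) by rewrite addrC subrK.
        exact: ler_normD.
      have Kw : (K + eta) * enorm w <= (K + eta) * (1 + A * eta).
        by rewrite ler_wpM2l // addr_ge0 // ltW.
      apply: le_trans tri _; apply: lerD; [exact: le_trans Lw Kw | exact: vw].
    apply/ler_addgt0Pr => ep ep0.
    set M := 2 + A * K + C + A.
    have M0 : 0 < M by apply: arith4.
    set eta := Num.min (1/2) (ep / M).
    have e0 : 0 < eta by rewrite lt_min divr_gt0 //= ?divr_gt0.
    have e1 : eta <= 1/2 by rewrite ge_min lexx.
    have eM : eta * M <= ep by rewrite -ler_pdivlMr // ge_min lexx orbT.
    have := main eta e0 (le_lt_trans e1 (arith3 R)).
    exact: arith1 K0 A0 C0 e0 e1 eM.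
  have hu : (u *m u^T) 0 0 <= 1.
    have -> : (u *m u^T) 0 0 = enorm u ^+ 2.
      by rewrite enorm_sq mxE; apply: eq_bigr => j _; rewrite !mxE expr2.
    by rewrite expr_le1 // enorm_ge0.
  have [c [uc cb]] := cramer hV hu dV.
  rewrite uc mulmx_sum_row linear_sum.
  apply: le_trans (ler_norm_sum _ _ _) _.
  apply: (@le_trans _ _ (\sum_(i < n) (`|\det V|^-1 * K))).
    apply: ler_sum => i _.
    have -> : row i V = v i by apply/matrixP => a b; rewrite !mxE [a]ord1.
    by rewrite linearZ normrZ ler_pM.
  rewrite sumr_const card_ord -mulr_natr.
  have a0 : 0 < `|\det V| by rewrite normr_gt0.
  have r0 : 0 <= r.
    by move: K0; rewrite /K -mulrA pmulr_lge0 // divr_gt0.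
  have -> : `|\det V|^-1 * K * n%:R = r * (d / `|\det V|).
    by rewrite /K; field; rewrite ?gt_eqF.
  rewrite -[X in _ <= X]mulr1 ler_wpM2l // ler_pdivrMr // mul1r ltW //.
apply: ge_ereal_sup => _ [u u1 <-].
case Es : (limsup_pairs F x g) => [s||].
- rewrite lee_fin; apply/ler_addgt0Pr => e e0; apply: core => //.
  by rewrite Es lte_fin ltrDl.
- exact: leey.
- exfalso; have := core (`|L u| - 1); rewrite Es ltNyr => /(_ isT u u1).
  lra.
Qed.
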